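(* Let $p$ be a prime and $m,n$ positive integers. Then $$\tfrac12\big[(m+n)^{2p}+(n\bmod 2)(m+n)^p\big]\equiv\tfrac12\big[m^{2p}+(n\bmod2)m^p\big]\pmod n,$$ i.e., the difference of the two sides is an integer divisible by $n$. *)

(* Defs.v *)
From HB Require Import structures.
From mathcomp Require Import all_boot all_order all_algebra.
Set Implicit Arguments. Unset Strict Implicit. Unset Printing Implicit Defensive.
Import Order.TTheory GRing.Theory Num.Theory.
Local Open Scope ring_scope.

Definition half_expr (x n p : nat) : rat :=
  (1 / 2) * ((x%:R) ^+ (2 * p) + (n %% 2)%N%:R * (x%:R) ^+ p).

(* Main.v *)
Require Import Defs.
From HB Require Import structures.
From mathcomp Require Import all_boot all_order all_algebra.
From mathcomp Require Import zify.
Import Order.TTheory GRing.Theory Num.Theory.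

Local Open Scope ring_scope.
Lemma half_nat (x n p : nat) :
  half_expr x n p = ((x ^ (2 * p) + (n %% 2) * x ^ p)%N)%:R / 2.
Proof. by rewrite /half_expr natrD natrM !natrX mulrC div1r. Qed.

Local Close Scope ring_scope.
Lemma congr_main (p m n : nat) : (0 < n)%N ->
  ((m + n) ^ (2 * p) + (n %% 2) * (m + n) ^ p
   == m ^ (2 * p) + (n %% 2) * m ^ p %[mod 2 * n])%N.
Proof.
move=> n0.
have [/eqP ev|od] := boolP (n %% 2 == 0)%N.
  rewrite ev !mul0n !addn0 !expnM.
  have [n' En] : exists n', n = (2 * n')%N by exists (n %/ 2); lia.
  have -> : ((m + n) ^ 2 = (m + n') * (2 * n) + m ^ 2)%N by rewrite En; lia.
  apply/eqP; rewrite -modnXm modnMDl modnXm //.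
have n1 : (n %% 2 = 1)%N by lia.
have -> : (n %% 2 = 1)%N by lia.
rewrite !mul1n chinese_remainder; last first.
  by rewrite coprime2n; move: n1; rewrite modn2; case: (odd n).
apply/andP; split.
  have E (x : nat) : (x ^ (2 * p) + x ^ p = x ^ p * (x ^ p + 1))%N.
    by rewrite mulnDr muln1 mul2n -addnn expnD.
  have O (a : nat) : odd (a * (a + 1)) = false.
    by rewrite oddM addn1 /=; case: (odd a).
  by rewrite !E !modn2 !O.
apply/eqP; rewrite -modnDm -[in RHS]modnDm -modnXm -[in X in _ = ((X + _) %% _)%N]modnXm.
by rewrite -[(m + n) ^ p %% n]modnXm -[(m ^ p %% n)]modnXm modnDr.
Qed.

Local Open Scope ring_scope.

Theorem lemma4 (p m n : nat) :
  prime p -> (0 < m)%N -> (0 < n)%N ->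
  exists k : int,
    half_expr (m + n) n p - half_expr m n p = ((k * n%:Z)%:~R : rat).
Proof.
move=> pp m0 n0.
have p0 := prime_gt0 pp.
set A := ((m + n) ^ (2 * p) + (n %% 2) * (m + n) ^ p)%N.
set B := (m ^ (2 * p) + (n %% 2) * m ^ p)%N.
have BA : (B <= A)%N.
  rewrite /A /B leq_add // ?leq_mul // leq_exp2r ?leq_addr //; lia.
have := @congr_main p m n n0; rewrite -/A -/B eqn_mod_dvd // => /dvdnP [q Eq].
exists q%:Z.
rewrite !half_nat -/A -/B -mulrBl -natrB // Eq.
rewrite intrM !natrM -!pmulrn.
by rewrite mulrCA [2%:R * _]mulrC mulfK // pnatr_eq0.
Qed.
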